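(* Let $n\ge 2$ and $\mu\in[0,1-\frac1n]$, and let $P=(p_{ij})$ be an optimal solution of problem (P) (i.e. an $n\times n$ MICK) all of whose entries are strictly positive. For $i,j\in\{1,\dots,n-1\}$ put $$\eta_{ij}=p_{ij}+p_{i+1,j}+p_{i,j+1}+p_{i+1,j+1}.$$ Then the quantity (''pseudo log odds ratio'') $$\frac{1}{\eta_{ij}}\log\frac{p_{ij}\,p_{i+1,j+1}}{p_{i+1,j}\,p_{i,j+1}}$$ takes the same value for all $i,j\in\{1,\dots,n-1\}$.
   Context: An $n\times n$ checkerboard copula is a real $n\times n$ matrix $P=(p_{ij})$ with nonnegative entries whose row sums and column sums all equal $\frac1n$. Let $\Xi=(\xi_{ij})\in\mathbb{R}^{n\times n}$ with $\xi_{ij}=1$ if $i=j$, $\xi_{ij}=2$ if $i>j$, $\xi_{ij}=0$ if $i<j$. Kendall's $\tau$ of $P$ is $\tau(P)=1-\mathrm{tr}(\Xi P\Xi P^\top)$. Problem (P): minimize $I(P)=\sum_{i,j=1}^n p_{ij}\log p_{ij}$ (with $0\log 0=0$) over all $n\times n$ checkerboard copulas $P$ satisfying $1-\mathrm{tr}(\Xi P\Xi P^\top)=\mu$, where $\mu\in[0,1-\frac1n]$ is given. *)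

(* Defs.v *)
From HB Require Import structures.
From mathcomp Require Import all_boot all_order all_algebra.
From mathcomp Require Import all_classical all_reals all_analysis.
Set Implicit Arguments. Unset Strict Implicit. Unset Printing Implicit Defensive.
Import Order.TTheory GRing.Theory Num.Theory.
Local Open Scope ring_scope.

(* Indices are 0-based: 'I_n = {0,...,n-1} corresponds to {1,...,n}. *)

Definition checkerboard_copula (R : realType) (n : nat) (P : 'M[R]_n) : Prop :=
  (forall i j, 0 <= P i j) /\
  (forall i, \sum_(j < n) P i j = n%:R^-1) /\
  (forall j, \sum_(i < n) P i j = n%:R^-1).

Definition Xi (R : realType) (n : nat) : 'M[R]_n :=
  \matrix_(i < n, j < n)
    (if i == j then 1 else if (j < i)%N then 2 else 0).

Definition kendall_tau (R : realType) (n : nat) (P : 'M[R]_n) : R :=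
  1 - \tr (Xi R n *m P *m Xi R n *m P^T).

Definition xlogx (R : realType) (x : R) : R := if x == 0 then 0 else x * ln x.

Definition info (R : realType) (n : nat) (P : 'M[R]_n) : R :=
  \sum_(i < n) \sum_(j < n) xlogx (P i j).

Definition feasibleP (R : realType) (n : nat) (mu : R) (P : 'M[R]_n) : Prop :=
  checkerboard_copula P /\ kendall_tau P = mu.

Definition optimalP (R : realType) (n : nat) (mu : R) (P : 'M[R]_n) : Prop :=
  feasibleP mu P /\ forall Q : 'M[R]_n, feasibleP mu Q -> info P <= info Q.

(* Entry of P at nat indices (a,b), 0-based; only used for a, b < n. *)
Definition entry (R : realType) (n : nat) (P : 'M[R]_n) (a b : nat) : R :=
  match n return 'M[R]_n -> R with
  | 0 => fun _ => 0
  | m.+1 => fun Q => Q (inord a) (inord b)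
  end P.

Definition pseudo_log_odds (R : realType) (n : nat) (P : 'M[R]_n)
    (i j : nat) : R :=
  let p a b := entry P a b in
  (p i j + p i.+1 j + p i j.+1 + p i.+1 j.+1)^-1 *
  ln ((p i j * p i.+1 j.+1) / (p i.+1 j * p i j.+1)).

(* Main.v *)
Require Import Defs.
From HB Require Import structures.
From mathcomp Require Import all_boot all_order all_algebra.
From mathcomp Require Import all_classical all_reals all_analysis.
From mathcomp Require Import zify ring lra.
Import Order.TTheory GRing.Theory Num.Theory.
Set Implicit Arguments. Unset Strict Implicit. Unset Printing Implicit Defensive.
Local Open Scope ring_scope.

Section Real.
Variable R : realType.

Lemma ln_le_sub1 (x : R) : 0 < x -> ln x <= x - 1.
Proof.
move=> x0; have := @le_ln1Dx R (x - 1).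
have -> : 1 + (x - 1) = x by ring.
apply; lra.
Qed.

Lemma xlogx_bound (x y : R) : 0 < x -> 0 < y ->
  xlogx y - xlogx x <= (ln x + 1) * (y - x) + (y - x) ^+ 2 / x.
Proof.
move=> x0 y0; rewrite /xlogx (gt_eqF x0) (gt_eqF y0).
have h1 : x * (ln y - ln x) <= y - x.
  have := @ln_le_sub1 (y / x) (divr_gt0 y0 x0).
  rewrite ln_div ?posrE // => h.
  have e : x * (y / x - 1) = y - x.
    by field; rewrite (gt_eqF x0).
  by rewrite -e ler_pM2l.
set d := ln y - ln x in h1.
have -> : y * ln y - x * ln x = y * d + (y - x) * ln x by rewrite /d; ring.
have key : x * (y * d - (y - x)) <= (y - x) ^+ 2.
  have : y * (x * d) <= y * (y - x) by rewrite ler_wpM2l // ltW.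
  move=> h; rewrite expr2; nra.
have : (y * d - (y - x)) <= (y - x) ^+ 2 / x.
  by rewrite ler_pdivlMr // mulrC.
move=> h; lra.
Qed.

Lemma lim0 (l K e0 : R) : 0 < e0 ->
  (forall eps, 0 < eps -> eps <= e0 -> 0 <= eps * l + K * eps ^+ 2) -> 0 <= l.
Proof.
move=> e00 H; rewrite leNgt; apply/negP => l0.
set K' := `|K| + 1.
have K'0 : 0 < K' by rewrite /K'; have := normr_ge0 K; lra.
set eps := Num.min e0 (- l / (2 * K')).
have eps0 : 0 < eps.
  by rewrite lt_min e00 /= divr_gt0 //; lra.
have epsle : eps <= - l / (2 * K') by rewrite ge_min lexx orbT.
have epsle0 : eps <= e0 by rewrite ge_min lexx.
have := H eps eps0 epsle0.
have h1 : K * eps ^+ 2 <= K' * eps ^+ 2.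
  apply: ler_wpM2r; first exact: sqr_ge0.
  rewrite /K'; have := ler_norm K; lra.
have h2 : K' * eps <= - l / 2.
  have e : K' * (- l / (2 * K')) = - l / 2.
    by field; rewrite (gt_eqF K'0).
  by rewrite -e ler_pM2l.
have h3 : eps * l + K' * eps ^+ 2 < 0.
  have -> : eps * l + K' * eps ^+ 2 = eps * (l + K' * eps) by rewrite expr2; ring.
  rewrite pmulr_rlt0 //; lra.
lra.
Qed.

Lemma quad (a b0 e c : R) : 0 < b0 -> exists2 e0, 0 < e0 &
  forall eps, 0 < eps -> eps <= e0 -> exists d,
    a * d ^+ 2 + (b0 + eps * e) * d + eps ^+ 2 * c = 0 /\
    `|d| <= (4 * `|c| / b0) * eps ^+ 2.
Proof.
move=> b00.
have ea : 0 <= `|a| := normr_ge0 a.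
have ec : 0 <= `|c| := normr_ge0 c.
have ee : 0 <= `|e| := normr_ge0 e.
have hac : 0 <= `|a| * `|c| by apply: mulr_ge0.
set e1 := b0 / (2 * (`|e| + 1)).
set e2 := b0 ^+ 2 / (16 * (`|a| * `|c|) + 1).
have e10 : 0 < e1 by rewrite divr_gt0 //; lra.
have e20 : 0 < e2 by rewrite divr_gt0 ?exprn_gt0 //; lra.
exists (Num.min 1 (Num.min e1 e2)).
  by rewrite !lt_min ltr01 e10 e20.
move=> eps eps0; rewrite !le_min => /and3P [eps1 epse1 epse2].
set b := b0 + eps * e.
have hb : b0 / 2 <= b.
  have h1 : eps * `|e| <= b0 / 2.
    have : eps * (`|e| + 1) <= e1 * (`|e| + 1) by rewrite ler_pM2r //; lra.
    have -> : e1 * (`|e| + 1) = b0 / 2 by rewrite /e1; field; lra.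
    have : 0 <= eps by lra.
    move=> ? ?; nra.
  have : - (eps * `|e|) <= eps * e.
    rewrite -mulrN ler_pM2l //; have := ler_norm (- e); rewrite normrN; lra.
  rewrite /b; lra.
set C := eps ^+ 2 * c.
have hC : `|C| = eps ^+ 2 * `|c| by rewrite /C normrM normrX ger0_norm //; lra.
have hac2 : 4 * (`|a| * `|C|) <= b0 ^+ 2 / 4.
  have eps2 : eps ^+ 2 <= eps by rewrite expr2 ger_pMl.
  have : eps * (16 * (`|a| * `|c|) + 1) <= b0 ^+ 2.
    have h0 : 0 < 16 * (`|a| * `|c|) + 1 by lra.
    have : eps * (16 * (`|a| * `|c|) + 1) <= e2 * (16 * (`|a| * `|c|) + 1).
      by rewrite ler_pM2r.
    by rewrite /e2 mulrVK ?unitfE ?(gt_eqF h0).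
  rewrite hC => h.
  have : 0 <= eps ^+ 2 := sqr_ge0 eps.
  move=> h2; nra.
set disc := b ^+ 2 - 4 * a * C.
have hdisc : 0 <= disc.
  have : 4 * a * C <= 4 * (`|a| * `|C|).
    rewrite -mulrA -normrM; have := ler_norm (a * C); lra.
  have : b0 ^+ 2 / 4 <= b ^+ 2.
    have : (b0 / 2) ^+ 2 <= b ^+ 2 by rewrite ler_sqr ?nnegrE; lra.
    by rewrite expr_div_n; lra.
  rewrite /disc; lra.
set s := Num.sqrt disc.
have s0 : 0 <= s := sqrtr_ge0 disc.
have s2 : s ^+ 2 = disc := sqr_sqrtr hdisc.
have bs : b0 / 2 <= b + s by lra.
have bs0 : b + s != 0 by apply: lt0r_neq0; lra.
exists (- 2 * C / (b + s)); split.
  have : (b + s) ^+ 2 * (a * (- 2 * C / (b + s)) ^+ 2 + b * (- 2 * C / (b + s)) + C)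
     = C * (4 * a * C - b ^+ 2 + s ^+ 2).
    by field.
  rewrite s2 /disc.
  have -> : C * (4 * a * C - b ^+ 2 + (b ^+ 2 - 4 * a * C)) = 0 by ring.
  by move/eqP; rewrite mulf_eq0 expf_eq0 /= (negbTE bs0) /= => /eqP.
rewrite !normrM normfV normrN (ger0_norm (_ : 0 <= 2)) // (ger0_norm (ltW eps0)).
rewrite -expr2.
rewrite (ger0_norm (_ : 0 <= b + s)); last by lra.
rewrite ler_pdivrMr; last by lra.
have h : 0 <= 2 * (eps ^+ 2 * `|c|) by apply: mulr_ge0 => //; apply: mulr_ge0 => //; apply: sqr_ge0.
have : 4 * `|c| / b0 * eps ^+ 2 * (b0 / 2) = 2 * (eps ^+ 2 * `|c|).
  by field; rewrite (gt_eqF b00).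
move=> e'.
have hk : 0 <= 4 * `|c| / b0 * eps ^+ 2.
  by apply: mulr_ge0; [apply: divr_ge0 => //; lra | apply: sqr_ge0].
by rewrite -e' ler_wpM2l.
Qed.
End Real.

Section Mat.
Variable R : realType.
Variable n : nat.
Implicit Types (M N P A B : 'M[R]_n).

Definition beta M N := \tr (Xi R n *m M *m Xi R n *m N^T).
Definition Lin P M := beta P M + beta M P.
Definition ell P M := \sum_(a < n) \sum_(b < n) ln (P a b) * M a b.
Definition zs M := (forall a, \sum_(b < n) M a b = 0) /\ (forall b, \sum_(a < n) M a b = 0).

Lemma betaDl M1 M2 N : beta (M1 + M2) N = beta M1 N + beta M2 N.
Proof. by rewrite /beta mulmxDr !mulmxDl mxtraceD. Qed.
Lemma betaZl c M N : beta (c *: M) N = c * beta M N.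
Proof. by rewrite /beta -scalemxAr -!scalemxAl mxtraceZ. Qed.
Lemma betaDr M N1 N2 : beta M (N1 + N2) = beta M N1 + beta M N2.
Proof. by rewrite /beta linearD /= mulmxDr mxtraceD. Qed.
Lemma betaZr c M N : beta M (c *: N) = c * beta M N.
Proof. by rewrite /beta linearZ /= -scalemxAr mxtraceZ. Qed.

Lemma kt_beta P : kendall_tau P = 1 - beta P P.
Proof. by []. Qed.

Lemma tau_expand P H : kendall_tau (P + H) = kendall_tau P - Lin P H - beta H H.
Proof. rewrite !kt_beta /Lin !betaDl !betaDr; lra. Qed.

Lemma Lin_lin P x y M N : Lin P (x *: M + y *: N) = x * Lin P M + y * Lin P N.
Proof. rewrite /Lin betaDl betaDr !betaZl !betaZr; ring. Qed.

Lemma ell_lin P x y M N : ell P (x *: M + y *: N) = x * ell P M + y * ell P N.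
Proof.
rewrite /ell !mulr_sumr -big_split; apply: eq_bigr => a _.
rewrite !mulr_sumr -big_split; apply: eq_bigr => b _; rewrite !mxE /=; ring.
Qed.

Lemma zs_lin x y M N : zs M -> zs N -> zs (x *: M + y *: N).
Proof.
move=> [Mr Mc] [Nr Nc]; split.
  move=> a; under eq_bigr => b _ do rewrite !mxE.
  by rewrite big_split /= -!mulr_sumr Mr Nr !mulr0 addr0.
move=> b; under eq_bigr => a _ do rewrite !mxE.
by rewrite big_split /= -!mulr_sumr Mc Nc !mulr0 addr0.
Qed.

Lemma le_sum2 (F : 'I_n -> 'I_n -> R) a b : (forall a b, 0 <= F a b) ->
  F a b <= \sum_(a < n) \sum_(b < n) F a b.
Proof.
move=> F0; rewrite (bigD1 a) //= (bigD1 b) //=.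
have h1 : 0 <= \sum_(i < n | i != b) F a i by apply: sumr_ge0.
have h2 : 0 <= \sum_(i < n | i != a) \sum_(j < n) F i j.
  by apply: sumr_ge0 => i _; apply: sumr_ge0.
lra.
Qed.

End Mat.

Section Key.
Variable R : realType.
Variable n : nat.

Lemma key (mu : R) (P A B : 'M[R]_n) : optimalP mu P -> (forall a b, 0 < P a b) ->
  zs A -> zs B -> Lin P A = 0 -> 0 < Lin P B -> 0 <= ell P A.
Proof.
move=> [[[P0 [rowP colP]] tauP] opt] pos [Ar Ac] [Br Bc] LA LB.
have [e0 e00 H] := quad (beta B B) (beta A B + beta B A) (beta A A) LB.
set K := 4 * `|beta A A| / Lin P B.
set T := \sum_(a < n) \sum_(b < n) (`|A a b| + `|B a b|).
set W := \sum_(a < n) \sum_(b < n) (P a b)^-1.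
set S := \sum_(a < n) \sum_(b < n) (`|A a b| + `|B a b|) ^+ 2 / P a b.
have K0 : 0 <= K by apply: divr_ge0; [have := normr_ge0 (beta A A); lra | lra].
have X0 : forall a b, 0 <= `|A a b| + `|B a b|.
  by move=> a b; apply: addr_ge0.
have T0 : 0 <= T by apply: sumr_ge0 => a _; apply: sumr_ge0.
have W0 : 0 <= W.
  by apply: sumr_ge0 => a _; apply: sumr_ge0 => b _; rewrite invr_ge0 ltW.
have S0 : 0 <= S.
  apply: sumr_ge0 => a _; apply: sumr_ge0 => b _.
  by apply: divr_ge0; [apply: sqr_ge0 | apply: ltW].
set e1 := Num.min e0 (Num.min (1 / (K + 1)) (1 / (2 * (W + 1) * (T + 1)))).
have e10 : 0 < e1.
  rewrite !lt_min e00 /= !divr_gt0 //; try lra.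
  by apply: mulr_gt0; [apply: mulr_gt0|]; lra.
apply: (lim0 (K := K * `|ell P B| + S) e10).
move=> eps eps0; rewrite !le_min => /and3P [epse0 epsK epsW].
have [d [dq dle]] := H eps eps0 epse0.
have dK : `|d| <= eps.
  have h : eps * (K + 1) <= 1.
    by move: epsK; rewrite ler_pdivlMr //; lra.
  have : K * eps ^+ 2 <= eps by rewrite expr2; nra.
  rewrite /K; lra.
set Hm := eps *: A + d *: B.
set Q := P + Hm.
have QE : forall a b, Q a b = P a b + Hm a b by move=> a b; rewrite mxE.
have HE : forall a b, Hm a b = eps * A a b + d * B a b by move=> a b; rewrite !mxE.
have hb : forall a b, `|Hm a b| <= eps * (`|A a b| + `|B a b|).
  move=> a b; rewrite HE.
  have h1 := ler_normD (eps * A a b) (d * B a b).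
  rewrite !normrM (gtr0_norm eps0) in h1.
  have : `|d| * `|B a b| <= eps * `|B a b| by rewrite ler_wpM2r.
  lra.
have Qpos : forall a b, 0 < Q a b.
  move=> a b; rewrite QE.
  have hP : 1 < P a b * (W + 1).
    have : (P a b)^-1 <= W.
      by apply: (le_sum2 (F := fun a b => (P a b)^-1)) => i j; rewrite invr_ge0 ltW.
    move=> h; have hp := pos a b.
    have : P a b * (P a b)^-1 = 1 by rewrite divff // gt_eqF.
    nra.
  have hX : `|A a b| + `|B a b| <= T.
    exact: (le_sum2 (F := fun a b => `|A a b| + `|B a b|)).
  have he : eps * (2 * (W + 1) * (T + 1)) <= 1.
    by move: epsW; rewrite ler_pdivlMr; [lra | apply: mulr_gt0; [apply: mulr_gt0|]; lra].
  have hH := hb a b.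
  have := ler_norm (- Hm a b); rewrite normrN => hN.
  have hp := pos a b.
  have : eps * (`|A a b| + `|B a b|) * (W + 1) < P a b * (W + 1).
    have : eps * (`|A a b| + `|B a b|) <= eps * (T + 1).
      rewrite ler_pM2l //; lra.
    nra.
  rewrite ltr_pM2r; last by lra.
  lra.
have feas : feasibleP mu Q.
  split; last first.
    rewrite tau_expand tauP.
    have E : Lin P Hm + beta Hm Hm =
       beta B B * d ^+ 2 + (Lin P B + eps * (beta A B + beta B A)) * d + eps ^+ 2 * beta A A.
      rewrite /Hm Lin_lin LA !betaDl !betaDr !betaZl !betaZr; ring.
    lra.
  split; first by move=> a b; exact: ltW.
  split.
    move=> a; under eq_bigr => b _ do rewrite QE HE.
    rewrite big_split big_split /= -!mulr_sumr Ar Br rowP; lra.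
  move=> b; under eq_bigr => a _ do rewrite QE HE.
  rewrite big_split big_split /= -!mulr_sumr Ac Bc colP; lra.
have hopt := opt Q feas.
have hsum : info Q - info P <=
  \sum_(a < n) \sum_(b < n) ((ln (P a b) + 1) * Hm a b + Hm a b ^+ 2 / P a b).
  rewrite /info -sumrB; apply: ler_sum => a _; rewrite -sumrB; apply: ler_sum => b _.
  have := xlogx_bound (pos a b) (Qpos a b); rewrite QE.
  by have -> : P a b + Hm a b - P a b = Hm a b by ring.
have hsplit : \sum_(a < n) \sum_(b < n) ((ln (P a b) + 1) * Hm a b + Hm a b ^+ 2 / P a b)
   = ell P Hm + \sum_(a < n) \sum_(b < n) Hm a b
     + \sum_(a < n) \sum_(b < n) Hm a b ^+ 2 / P a b.
  rewrite /ell -!big_split; apply: eq_bigr => a _; rewrite -!big_split.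
  by apply: eq_bigr => b _ /=; ring.
have hz : \sum_(a < n) \sum_(b < n) Hm a b = 0.
  apply: big1 => a _; under eq_bigr => b _ do rewrite HE.
  by rewrite big_split /= -!mulr_sumr Ar Br !mulr0 addr0.
have hq : \sum_(a < n) \sum_(b < n) Hm a b ^+ 2 / P a b <= eps ^+ 2 * S.
  rewrite /S !mulr_sumr; apply: ler_sum => a _; rewrite mulr_sumr.
  apply: ler_sum => b _; rewrite mulrA ler_pM2r ?invr_gt0 //.
  have := hb a b; have := normr_ge0 (Hm a b).
  have -> : Hm a b ^+ 2 = `|Hm a b| ^+ 2 by rewrite -normrX ger0_norm // sqr_ge0.
  move=> h1 h2.
  have := X0 a b; rewrite -exprMn !expr2; nra.
have hl : ell P Hm = eps * ell P A + d * ell P B by rewrite /Hm ell_lin.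
have hd : d * ell P B <= K * eps ^+ 2 * `|ell P B|.
  have := ler_norm (d * ell P B); rewrite normrM => h.
  have : `|d| * `|ell P B| <= K * eps ^+ 2 * `|ell P B|.
    by rewrite ler_wpM2r.
  lra.
have -> : eps * ell P A + (K * `|ell P B| + S) * eps ^+ 2 =
   eps * ell P A + K * eps ^+ 2 * `|ell P B| + eps ^+ 2 * S by ring.
lra.
Qed.
End Key.

Section Blocks.
Variable R : realType.
Variable m : nat.
Local Notation n := m.+1.

Definition xi (a b : nat) : R := if a == b then 1 else if (b < a)%N then 2 else 0.
Definition indp (a i : nat) : R := (a == i)%:R + (a == i.+1)%:R.
Definition ind (a i : nat) : R := (a == i)%:R - (a == i.+1)%:R.

Lemma xi_col a i : xi a i - xi a i.+1 = indp a i.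
Proof.
rewrite /xi /indp.
case E1: (a == i); case E2: (a == i.+1); case E3: (i < a)%N; case E4: (i.+1 < a)%N;
  rewrite /= ?addr0 ?add0r ?subr0 ?sub0r; try (exfalso; lia); try ring.
Qed.
Lemma xi_row b i : xi i b - xi i.+1 b = - indp b i.
Proof.
rewrite /xi /indp.
case E1: (i == b); case E2: (i.+1 == b); case E3: (b < i)%N; case E4: (b < i.+1)%N;
case E5: (b == i); case E6: (b == i.+1);
  rewrite /= ?addr0 ?add0r ?subr0 ?sub0r; try (exfalso; lia); try ring.
Qed.

Definition cvec i : 'cV[R]_n := \col_a ind a i.
Definition rvec i : 'rV[R]_n := \row_a ind a i.
Definition Dm i j : 'M[R]_n := cvec i *m rvec j.
Definition blk_eta (N : 'M[R]_n) i j : R :=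
  N (inord i) (inord j) + N (inord i.+1) (inord j) + N (inord i) (inord j.+1)
  + N (inord i.+1) (inord j.+1).

Lemma XiE (a b : 'I_n) : Xi R n a b = xi a b.
Proof. by rewrite mxE. Qed.

Lemma sumI (F : 'I_n -> R) i : (i < n)%N ->
  \sum_(a < n) F a * ((a : nat) == i)%:R = F (inord i).
Proof.
move=> hi; rewrite (bigD1 (inord i)) //= inordK // eqxx mulr1 big1 ?addr0 //.
move=> a hai; case E: ((a : nat) == i); last by rewrite mulr0.
move/eqP: E => E; exfalso; move/eqP: hai; apply; apply: val_inj; rewrite /= inordK //.
Qed.

Lemma sum_ind (F : 'I_n -> R) i : (i.+1 < n)%N ->
  \sum_(a < n) F a * ind a i = F (inord i) - F (inord i.+1).
Proof.
move=> hi; rewrite /ind; under eq_bigr => a _ do rewrite mulrBr.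
by rewrite sumrB !sumI // ltnW.
Qed.

Lemma sum_indp (F : 'I_n -> R) i : (i.+1 < n)%N ->
  \sum_(a < n) F a * indp a i = F (inord i) + F (inord i.+1).
Proof.
move=> hi; rewrite /indp; under eq_bigr => a _ do rewrite mulrDr.
by rewrite big_split /= !sumI // ltnW.
Qed.

Lemma Xi_cvec i : (i.+1 < n)%N -> Xi R n *m cvec i = \col_a indp a i.
Proof.
move=> hi; apply/colP => a; rewrite [LHS]mxE [RHS]mxE.
under eq_bigr => b _ do rewrite XiE mxE.
rewrite (sum_ind (fun b : 'I_n => xi a b) hi) (inordK hi) (inordK (ltnW hi)).
exact: xi_col.
Qed.

Lemma rvec_Xi j : (j.+1 < n)%N -> rvec j *m Xi R n = \row_b (- indp b j).
Proof.
move=> hj; apply/rowP => b; rewrite [LHS]mxE [RHS]mxE.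
under eq_bigr => c _ do rewrite XiE mxE mulrC.
rewrite (sum_ind (fun c : 'I_n => xi c b) hj) (inordK hj) (inordK (ltnW hj)).
exact: xi_row.
Qed.

Lemma trmx_cvec i : (cvec i)^T = rvec i.
Proof. by apply/matrixP => a b; rewrite !mxE. Qed.
Lemma trmx_rvec i : (rvec i)^T = cvec i.
Proof. by apply/matrixP => a b; rewrite !mxE. Qed.

Lemma tr_rc (x : 'rV[R]_n) (M : 'M[R]_n) (y : 'cV[R]_n) :
  \tr (x *m M *m y) = \sum_(b < n) (\sum_(a < n) x 0 a * M a b) * y b 0.
Proof.
rewrite trace_mx11 mxE; apply: eq_bigr => b _; by rewrite mxE.
Qed.

Lemma beta_Dl (N : 'M[R]_n) i j : (i.+1 < n)%N -> (j.+1 < n)%N ->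
  beta (Dm i j) N = - blk_eta N i j.
Proof.
move=> hi hj.
rewrite /beta /Dm !mulmxA -(mulmxA (Xi R n *m cvec i)) -(mulmxA (Xi R n *m cvec i)).
rewrite mxtrace_mulC Xi_cvec // rvec_Xi // tr_rc.
under eq_bigr => b _ do (under eq_bigr => a _ do rewrite !mxE mulrC mulrN; rewrite mxE).
under eq_bigr => b _ do rewrite sumrN (sum_indp (fun a => N b a)) //.
under eq_bigr => b _ do rewrite mulNr.
rewrite sumrN (sum_indp (fun b : 'I_n => N b (inord j) + N b (inord j.+1))) //.
rewrite /blk_eta; ring.
Qed.

Lemma beta_Dr (N : 'M[R]_n) i j : (i.+1 < n)%N -> (j.+1 < n)%N ->
  beta N (Dm i j) = - blk_eta N i j.
Proof.
move=> hi hj.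
rewrite /beta /Dm trmx_mul trmx_cvec trmx_rvec !mulmxA mxtrace_mulC !mulmxA.
rewrite rvec_Xi // -mulmxA Xi_cvec // tr_rc.
under eq_bigr => b _ do (under eq_bigr => a _ do rewrite !mxE mulrC mulrN; rewrite mxE).
under eq_bigr => b _ do rewrite sumrN (sum_indp (fun a => N a b)) //.
under eq_bigr => b _ do rewrite mulNr.
rewrite sumrN (sum_indp (fun b : 'I_n => N (inord i) b + N (inord i.+1) b)) //.
rewrite /blk_eta; ring.
Qed.

Lemma Lin_D (P : 'M[R]_n) i j : (i.+1 < n)%N -> (j.+1 < n)%N ->
  Lin P (Dm i j) = - 2 * blk_eta P i j.
Proof. by move=> hi hj; rewrite /Lin beta_Dl // beta_Dr //; ring. Qed.

Lemma DmE i j a b : Dm i j a b = ind a i * ind b j.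
Proof. by rewrite /Dm mxE big_ord1 !mxE. Qed.

Lemma ell_D (P : 'M[R]_n) i j : (i.+1 < n)%N -> (j.+1 < n)%N ->
  ell P (Dm i j) = ln (P (inord i) (inord j)) - ln (P (inord i) (inord j.+1))
     - (ln (P (inord i.+1) (inord j)) - ln (P (inord i.+1) (inord j.+1))).
Proof.
move=> hi hj; rewrite /ell.
under eq_bigr => a _ do (under eq_bigr => b _ do rewrite DmE mulrA mulrAC; rewrite -mulr_suml).
rewrite (sum_ind (fun a => \sum_(b < n) ln (P a b) * ind b j)) //.
by rewrite !(sum_ind (fun b => ln (P _ b))).
Qed.

Lemma zs_D i j : (i.+1 < n)%N -> (j.+1 < n)%N -> zs (Dm i j).
Proof.
move=> hi hj; split.
  move=> a; under eq_bigr => b _ do rewrite DmE -[ind b j]mul1r.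
  by rewrite -mulr_sumr (sum_ind (fun _ => 1)) // subrr mulr0.
move=> b; under eq_bigr => a _ do rewrite DmE mulrC -[ind a i]mul1r.
by rewrite -mulr_sumr (sum_ind (fun _ => 1)) // subrr mulr0.
Qed.

End Blocks.

Unset Implicit Arguments.

Theorem theorem3 (R : realType) (n : nat) (mu : R) (P : 'M[R]_n) :
  (2 <= n)%N ->
  0 <= mu -> mu <= 1 - n%:R^-1 ->
  optimalP mu P ->
  (forall i j, 0 < P i j) ->
  forall i j k l : nat,
    (i.+1 < n)%N -> (j.+1 < n)%N -> (k.+1 < n)%N -> (l.+1 < n)%N ->
    pseudo_log_odds P i j = pseudo_log_odds P k l.
Proof.
case: n P => [|m] P; first by [].
move=> _ _ _ hopt hpos i j k l hi hj hk hl.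
have plo : forall a b, (a.+1 < m.+1)%N -> (b.+1 < m.+1)%N ->
    pseudo_log_odds P a b = (blk_eta P a b)^-1 * ell P (@Dm R m a b).
  move=> a b ha hb; rewrite /pseudo_log_odds /entry /= ell_D //.
  rewrite ln_div ?posrE ?mulr_gt0 // !lnM ?posrE //.
  congr (_ * _); lra.
have etapos : forall a b, 0 < blk_eta P a b.
  by move=> a b; rewrite /blk_eta !addr_gt0.
rewrite !plo //.
set e1 := blk_eta P i j; set e2 := blk_eta P k l.
set D1 := @Dm R m i j; set D2 := @Dm R m k l.
have L1 : Lin P D1 = - 2 * e1 by rewrite Lin_D.
have L2 : Lin P D2 = - 2 * e2 by rewrite Lin_D.
have z1 : zs D1 by apply: zs_D.
have z2 : zs D2 by apply: zs_D.
have hB : 0 < Lin P ((-1) *: D1 + 0 *: D2).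
  rewrite Lin_lin L1 L2; have := etapos i j; rewrite -/e1; lra.
have zB : zs ((-1) *: D1 + 0 *: D2) by apply: zs_lin.
have h1 := key hopt hpos (zs_lin (Lin P D2) (- Lin P D1) z1 z2) zB
  (ltac:(rewrite Lin_lin; ring)) hB.
have h2 := key hopt hpos (zs_lin (- Lin P D2) (Lin P D1) z1 z2) zB
  (ltac:(rewrite Lin_lin; ring)) hB.
rewrite !ell_lin L1 L2 in h1 h2.
have e10 : e1 != 0 by apply: lt0r_neq0; apply: etapos.
have e20 : e2 != 0 by apply: lt0r_neq0; apply: etapos.
have E : e2 * ell P D1 = e1 * ell P D2 by nra.
apply/eqP; rewrite -subr_eq0.
have -> : e1^-1 * ell P D1 - e2^-1 * ell P D2 = (e2 * ell P D1 - e1 * ell P D2) / (e1 * e2).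
  by field; rewrite e10 e20.
by rewrite E subrr mul0r.
Qed.
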